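(* Let $\epsilon>0$ and let $Q$ be the angle variable described in the context, defined on $\mathbb{R}^2\setminus\{(0,0)\}$ with values in $\mathbb{R}/2\pi\mathbb{Z}$. Then the level set $\{x=0\}$ in the $(x,v)$-plane equals $\{Q=\frac{\pi}{2}\}\cup\{Q=-\frac{\pi}{2}\}\cup\{(x,v)=(0,0)\}$.
   Context: Let $\Phi(x)=\frac{x^2}{2}+\frac{\epsilon x^4}{2}$ and $H(x,v)=\frac{v^2}{2}+\Phi(x)$. For $(x,v)\neq(0,0)$ define the angle $\chi\in\mathbb{R}/2\pi\mathbb{Z}$ by $\chi=\arcsin\big(v/\sqrt{2H}\big)$ if $x>0$ and $\chi=\pi-\arcsin\big(v/\sqrt{2H}\big)$ if $x\leq 0$; then $(x,v)\mapsto(\chi,H)$ is a bijection onto $(\mathbb{R}/2\pi\mathbb{Z})\times(0,\infty)$, and we write $x=x(\chi,H)$. Set $a(\chi,H)=\sqrt{2}\,\frac{1+2\epsilon x^2}{\sqrt{1+\epsilon x^2}}$ with $x=x(\chi,H)$. Define $c(H)>0$ by $c(H)\int_0^{2\pi}\frac{\mathrm{d}\chi}{a(\chi,H)}=2\pi$, and $Q(\chi,H)=c(H)\int_0^{\chi}\frac{\mathrm{d}\chi'}{a(\chi',H)}$ (well defined modulo $2\pi$). *)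

(* Defs.v *)
From Stdlib Require Import Reals ClassicalEpsilon.
From Coquelicot Require Import Coquelicot.
Open Scope R_scope.

Definition Phi (eps x : R) : R := x ^ 2 / 2 + eps * x ^ 4 / 2.
Definition Hen (eps x v : R) : R := v ^ 2 / 2 + Phi eps x.

(* A real representative of the angle chi(x,v) in R/2piZ *)
Definition chi_of (eps x v : R) : R :=
  if Rlt_dec 0 x then asin (v / sqrt (2 * Hen eps x v))
  else PI - asin (v / sqrt (2 * Hen eps x v)).

Definition cong2pi (a b : R) : Prop := exists k : Z, a - b = 2 * PI * IZR k.

(* x = x(chi, H): the x-coordinate of the (unique, by the bijection of the
   context) point (x,v) <> (0,0) with angle chi (mod 2 pi) and energy H. *)
Definition x_of (eps chi H : R) : R :=
  epsilon (inhabits 0) (fun x => exists v, (x, v) <> (0, 0) /\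
     Hen eps x v = H /\ cong2pi (chi_of eps x v) chi).

Definition a_fun (eps chi H : R) : R :=
  let x := x_of eps chi H in
  sqrt 2 * (1 + 2 * eps * x ^ 2) / sqrt (1 + eps * x ^ 2).

Definition c_fun (eps H : R) : R :=
  2 * PI / RInt (fun t => / a_fun eps t H) 0 (2 * PI).

Definition Q_fun (eps chi H : R) : R :=
  c_fun eps H * RInt (fun t => / a_fun eps t H) 0 chi.

(* Q as a function of (x,v) (meaningful modulo 2 pi, for (x,v) <> (0,0)) *)
Definition Q_xv (eps x v : R) : R := Q_fun eps (chi_of eps x v) (Hen eps x v).

(* Main.v *)
Require Import Defs.
From Stdlib Require Import Reals ClassicalEpsilon Lra Lia Psatz FunctionalExtensionality.
From Coquelicot Require Import Coquelicot.
Open Scope R_scope.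

Lemma cos_2pik (k : Z) : sin (2 * PI * IZR k) = 0 /\ cos (2 * PI * IZR k) = 1.
Proof.
  split.
  - apply sin_eq_0_1. exists (2 * k)%Z. rewrite mult_IZR. ring.
  - replace (2 * PI * IZR k) with (2 * (IZR k * PI)) by ring.
    rewrite cos_2a_sin. rewrite (sin_eq_0_1 (IZR k * PI)) by (exists k; ring). ring.
Qed.

Lemma cong_trig a b : cong2pi a b -> sin a = sin b /\ cos a = cos b.
Proof.
  intros [k Hk]. replace a with (b + 2 * PI * IZR k) by lra.
  destruct (cos_2pik k) as [s c].
  rewrite sin_plus, cos_plus, s, c. split; ring.
Qed.

Lemma trig_cong a b : sin a = sin b -> cos a = cos b -> cong2pi a b.
Proof.
  intros hs hc.
  assert (h1 : sin (a - b) = 0) by (rewrite sin_minus, hs, hc; ring).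
  assert (h2 : cos (a - b) = 1).
  { rewrite cos_minus, hs, hc. pose proof (sin2_cos2 b). unfold Rsqr in H. lra. }
  assert (h3 : sin ((a - b) / 2) = 0).
  { replace (a - b) with (2 * ((a - b) / 2)) in h2 by field.
    rewrite cos_2a_sin in h2. nra. }
  destruct (sin_eq_0_0 _ h3) as [k hk]. exists k. lra.
Qed.

Definition Yq (eps q : R) := (-1 + sqrt (1 + 8 * eps * q)) / (2 * eps).

Lemma quad_sol eps q y : 0 < eps -> 0 <= y -> eps * y ^ 2 + y = 2 * q -> y = Yq eps q.
Proof.
  intros he hy hq. unfold Yq.
  replace (1 + 8 * eps * q) with ((2 * eps * y + 1) ^ 2) by nra.
  rewrite sqrt_pow2 by nra. field. lra.
Qed.

Lemma quad_root eps q : 0 < eps -> 0 <= q -> 0 <= Yq eps q /\ eps * (Yq eps q) ^ 2 + Yq eps q = 2 * q.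
Proof.
  intros he hq. unfold Yq.
  assert (h1 : 1 <= sqrt (1 + 8 * eps * q)).
  { rewrite <- sqrt_1 at 1. apply sqrt_le_1_alt. nra. }
  assert (h2 : sqrt (1 + 8 * eps * q) ^ 2 = 1 + 8 * eps * q) by (apply pow2_sqrt; nra).
  split.
  - apply Rmult_le_pos; [lra | apply Rlt_le, Rinv_0_lt_compat; lra].
  - field_simplify; [| lra]. rewrite h2. field. lra.
Qed.

Lemma Yq_pos eps q : 0 < eps -> 0 < q -> 0 < Yq eps q.
Proof.
  intros he hq. unfold Yq.
  assert (h1 : 1 < sqrt (1 + 8 * eps * q)).
  { rewrite <- sqrt_1 at 1. apply sqrt_lt_1_alt. nra. }
  apply Rmult_lt_0_compat; [lra | apply Rinv_0_lt_compat; lra].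
Qed.

Lemma Phi_nonneg eps x : 0 < eps -> 0 <= Phi eps x.
Proof. intros. unfold Phi. assert (0 <= x ^ 2) by apply pow2_ge_0. assert (0 <= x ^ 4) by (replace (x^4) with ((x^2)^2) by ring; apply pow2_ge_0). assert (0 <= eps * x ^ 4) by (apply Rmult_le_pos; lra). lra. Qed.

Lemma Hen_pos eps x v : 0 < eps -> (x, v) <> (0, 0) -> 0 < Hen eps x v.
Proof.
  intros he hn. unfold Hen, Phi.
  destruct (Req_dec x 0) as [->|hx].
  - destruct (Req_dec v 0) as [->|hv]; [congruence|]. assert (0 < v ^ 2) by (apply pow2_gt_0; auto). lra.
  - assert (0 < x ^ 2) by (apply pow2_gt_0; auto). assert (0 <= x ^ 4) by (replace (x^4) with ((x^2)^2) by ring; apply pow2_ge_0). assert (0 <= v ^ 2) by apply pow2_ge_0. assert (0 <= eps * x ^ 4) by (apply Rmult_le_pos; lra). lra.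
Qed.

Lemma chi_trig eps x v : 0 < eps -> (x, v) <> (0, 0) ->
  let H := Hen eps x v in let s := v / sqrt (2 * H) in
  -1 <= s <= 1 /\ s ^ 2 = v ^ 2 / (2 * H) /\
  sin (chi_of eps x v) = s /\ cos (chi_of eps x v) ^ 2 = 1 - s ^ 2 /\
  (0 < x -> cos (chi_of eps x v) = sqrt (1 - s ^ 2)) /\
  (x <= 0 -> cos (chi_of eps x v) = - sqrt (1 - s ^ 2)).
Proof.
  intros he hn H s.
  assert (hH : 0 < H) by (apply Hen_pos; auto).
  assert (hs2 : s ^ 2 = v ^ 2 / (2 * H)).
  { unfold s, Rdiv. rewrite Rpow_mult_distr, pow_inv. rewrite pow2_sqrt by lra. field. lra. }
  assert (hP := Phi_nonneg eps x he).
  assert (hle : s ^ 2 <= 1).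
  { rewrite hs2. apply Rmult_le_reg_r with (2 * H); [lra|].
    unfold Rdiv. rewrite Rmult_assoc, Rinv_l by lra. unfold H, Hen. lra. }
  assert (hb : -1 <= s <= 1) by nra.
  assert (hsq : 0 <= 1 - s ^ 2) by lra.
  assert (hq := pow2_sqrt _ hsq).
  assert (hc : cos (asin s) = sqrt (1 - s ^ 2)).
  { rewrite cos_asin by auto. unfold Rsqr. f_equal. ring. }
  unfold chi_of. fold H. fold s.
  destruct (Rlt_dec 0 x) as [hx|hx].
  - rewrite sin_asin by auto. rewrite hc. repeat split; auto; try lra.
  - rewrite sin_PI_x, sin_asin by auto. rewrite Rtrigo_facts.cos_pi_minus, hc.
    repeat split; auto; try lra.
Qed.
Definition Yf eps H t := Yq eps (H * cos t ^ 2).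

Lemma x_of_exists eps t H : 0 < eps -> 0 < H ->
  exists x, exists v, (x, v) <> (0, 0) /\ Hen eps x v = H /\ cong2pi (chi_of eps x v) t.
Proof.
  intros he hH.
  assert (hq : 0 <= H * cos t ^ 2) by (apply Rmult_le_pos; [lra | apply pow2_ge_0]).
  destruct (quad_root eps _ he hq) as [hY0 hY].
  set (Y := Yq eps (H * cos t ^ 2)) in *.
  assert (hsY := pow2_sqrt _ hY0).
  set (x := if Rlt_dec 0 (cos t) then sqrt Y else - sqrt Y).
  set (v := sqrt (2 * H) * sin t).
  assert (hx2 : x ^ 2 = Y) by (unfold x; destruct (Rlt_dec 0 (cos t)); [auto | replace ((- sqrt Y) ^ 2) with (sqrt Y ^ 2) by ring; auto]).
  assert (h2H := pow2_sqrt (2 * H) ltac:(lra)).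
  assert (hsc := sin2_cos2 t). unfold Rsqr in hsc.
  assert (hHen : Hen eps x v = H).
  { unfold Hen, Phi, v. replace (x ^ 4) with ((x ^ 2) ^ 2) by ring. rewrite hx2.
    rewrite Rpow_mult_distr, h2H. nra. }
  assert (hsq2 : 0 < sqrt (2 * H)) by (apply sqrt_lt_R0; lra).
  assert (hn : (x, v) <> (0, 0)).
  { intros e. injection e. intros ev ex.
    assert (sin t = 0).
    { unfold v in ev. apply Rmult_integral in ev. destruct ev; [lra | auto]. }
    assert (hc2 : cos t ^ 2 = 1) by nra.
    assert (hYp : 0 < Y) by (unfold Y; apply Yq_pos; [auto | rewrite hc2; lra]).
    rewrite ex in hx2. simpl in hx2. lra. }
  exists x, v. split; [auto | split; [auto|]].
  destruct (chi_trig eps x v he hn) as [hb [hs2 [hs [hc2 [hcp hcn]]]]].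
  rewrite hHen in *.
  assert (hst : v / sqrt (2 * H) = sin t) by (unfold v; field; lra).
  rewrite hst in *.
  assert (hcs : 1 - sin t ^ 2 = cos t ^ 2) by lra.
  rewrite hcs in *.
  apply trig_cong; auto.
  destruct (Rlt_dec 0 (cos t)) as [hct|hct].
  - assert (hx : 0 < x).
    { unfold x. destruct (Rlt_dec 0 (cos t)); [|lra].
      apply sqrt_lt_R0. unfold Y. apply Yq_pos; auto.
      apply Rmult_lt_0_compat; auto. apply pow_lt; auto. }
    rewrite (hcp hx). apply sqrt_pow2; lra.
  - assert (hx : x <= 0).
    { unfold x. destruct (Rlt_dec 0 (cos t)); [lra|].
      pose proof (sqrt_pos Y). lra. }
    rewrite (hcn hx). replace (cos t ^ 2) with ((- cos t) ^ 2) by ring.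
    rewrite sqrt_pow2; lra.
Qed.

Lemma x_of_sq eps t H : 0 < eps -> 0 < H -> (x_of eps t H) ^ 2 = Yf eps H t.
Proof.
  intros he hH. unfold x_of.
  destruct (epsilon_spec (inhabits 0) _ (x_of_exists eps t H he hH)) as [v [hn [hHen hc]]].
  set (x := epsilon _ _) in *. clearbody x.
  destruct (cong_trig _ _ hc) as [hs hcc].
  destruct (chi_trig eps x v he hn) as [hb [hs2 [hs' [hc2 _]]]].
  rewrite hHen in *. rewrite hcc in hc2. rewrite hs in hs'.
  unfold Yf. apply quad_sol; auto. apply pow2_ge_0.
  rewrite hc2, hs2. unfold Hen, Phi in hHen. field_simplify; [|lra].
  replace (x ^ 4) with ((x ^ 2) ^ 2) in hHen by ring. rewrite <- hHen. field.
Qed.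

Definition gf eps H t :=
  / (sqrt 2 * (1 + 2 * eps * Yf eps H t) / sqrt (1 + eps * Yf eps H t)).

Lemma inv_a eps H : 0 < eps -> 0 < H -> (fun t => / a_fun eps t H) = gf eps H.
Proof.
  intros he hH. apply functional_extensionality. intros t.
  unfold a_fun, gf. rewrite x_of_sq by auto. reflexivity.
Qed.

Lemma gf_pos eps H t : 0 < eps -> 0 < H -> 0 < gf eps H t.
Proof.
  intros he hH. unfold gf.
  assert (hq : 0 <= H * cos t ^ 2) by (apply Rmult_le_pos; [lra | apply pow2_ge_0]).
  destruct (quad_root eps _ he hq) as [hY0 _]. unfold Yf.
  set (Y := Yq eps (H * cos t ^ 2)) in *.
  apply Rinv_0_lt_compat. unfold Rdiv. apply Rmult_lt_0_compat.
  apply Rmult_lt_0_compat. apply sqrt_lt_R0; lra. nra.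
  apply Rinv_0_lt_compat, sqrt_lt_R0. nra.
Qed.

Lemma gf_cont eps H t : 0 < eps -> 0 < H -> continuous (gf eps H) t.
Proof.
  intros he hH. apply (ex_derive_continuous (gf eps H)). unfold gf, Yf, Yq.
  auto_derive.
  set (q := H * (cos t * (cos t * 1))).
  assert (hq : 0 <= q) by (unfold q; replace (cos t * (cos t * 1)) with (cos t ^ 2) by ring;
     apply Rmult_le_pos; [lra | apply pow2_ge_0]).
  destruct (quad_root eps _ he hq) as [hY0 _]. unfold Yq, Rdiv in hY0.
  set (Y := (-1 + sqrt (1 + 8 * eps * q)) * / (2 * eps)) in *.
  assert (h1 : 0 < 1 + eps * Y) by nra.
  assert (h2 : 0 < sqrt (1 + eps * Y)) by (apply sqrt_lt_R0; lra).
  assert (h3 : 0 < sqrt 2) by (apply sqrt_lt_R0; lra).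
  repeat split; try nra.
  apply Rgt_not_eq. apply Rmult_lt_0_compat. apply Rmult_lt_0_compat; nra.
  apply Rinv_0_lt_compat; auto.
Qed.

Lemma gf_sym eps H t : gf eps H (PI - t) = gf eps H t /\ gf eps H (t + PI) = gf eps H t
  /\ gf eps H (0 - t) = gf eps H t.
Proof.
  unfold gf, Yf. rewrite Rtrigo_facts.cos_pi_minus, neg_cos.
  replace (0 - t) with (- t) by ring. rewrite cos_neg.
  replace ((- cos t) ^ 2) with (cos t ^ 2) by ring. auto.
Qed.

Section Int.
Variable f : R -> R.
Hypothesis fc : forall z, continuous f z.

Lemma my_exr a b : ex_RInt f a b.
Proof. apply (@ex_RInt_continuous R_CompleteNormedModule). intros; apply fc. Qed.

Lemma my_chasles a b c : RInt f a b + RInt f b c = RInt f a c.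
Proof. apply (RInt_Chasles f a b c); apply my_exr. Qed.

Lemma my_swap a b : RInt f b a = - RInt f a b.
Proof. rewrite <- (opp_RInt_swap f a b) by apply my_exr. reflexivity. Qed.

Lemma RInt_lin u v a b : RInt (fun y => u * f (u * y + v)) a b = RInt f (u * a + v) (u * b + v).
Proof. rewrite <- RInt_comp_lin by apply my_exr. reflexivity. Qed.

Lemma refl_int c a b : (forall y, f (c - y) = f y) -> RInt f (c - b) (c - a) = RInt f a b.
Proof.
  intros hs. pose proof (RInt_lin (-1) c b a) as h.
  replace (-1 * b + c) with (c - b) in h by ring.
  replace (-1 * a + c) with (c - a) in h by ring.
  rewrite <- h.
  rewrite (RInt_ext (fun y => -1 * f (-1 * y + c)) (fun y => opp (f y)) b a).
  rewrite (@RInt_opp R_CompleteNormedModule) by apply my_exr. rewrite (my_swap a b). unfold opp; simpl. ring.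
  intros x _. replace (-1 * x + c) with (c - x) by ring. rewrite hs. unfold opp. simpl. ring.
Qed.

Lemma shift_int c a b : (forall y, f (y + c) = f y) -> RInt f (a + c) (b + c) = RInt f a b.
Proof.
  intros hs. pose proof (RInt_lin 1 c a b) as h.
  replace (1 * b + c) with (b + c) in h by ring.
  replace (1 * a + c) with (a + c) in h by ring.
  rewrite <- h. apply RInt_ext. intros x _. replace (1 * x + c) with (x + c) by ring.
  rewrite hs, Rmult_1_l. reflexivity.
Qed.
End Int.

Lemma int_facts eps H : 0 < eps -> 0 < H ->
  let g := gf eps H in let J := RInt g 0 (PI / 2) in
  0 < J /\ RInt g 0 (2 * PI) = 4 * J :> R /\ RInt g 0 (3 * (PI / 2)) = 3 * J :> R /\
  RInt g 0 (- (PI / 2)) = - J :> R /\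
  (forall a b, a < b -> 0 < RInt g a b) /\
  (forall a b c, RInt g a b + RInt g b c = RInt g a c).
Proof.
  intros he hH g J.
  assert (fc : forall z, continuous g z) by (intros; apply gf_cont; auto).
  assert (hpos : forall a b, a < b -> 0 < RInt g a b).
  { intros a b hab. apply RInt_gt_0; auto. intros; apply gf_pos; auto. }
  assert (hch := my_chasles g fc).
  destruct (gf_sym eps H 0) as [_ [_ _]].
  assert (s1 : forall y, g (PI - y) = g y) by (intros; apply gf_sym).
  assert (s2 : forall y, g (y + PI) = g y) by (intros; apply gf_sym).
  assert (s3 : forall y, g (0 - y) = g y) by (intros; apply gf_sym).
  pose proof PI_RGT_0.
  assert (k1 : RInt g (PI / 2) PI = J :> R).
  { pose proof (refl_int g fc PI 0 (PI / 2) s1) as h.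
    replace (PI - PI / 2) with (PI / 2) in h by field. replace (PI - 0) with PI in h by ring. auto. }
  assert (kpi : RInt g 0 PI = 2 * J :> R) by (rewrite <- (hch 0 (PI / 2) PI), k1; unfold J; ring).
  assert (k2 : RInt g PI (2 * PI) = 2 * J :> R).
  { pose proof (shift_int g fc PI 0 PI s2) as h.
    replace (0 + PI) with PI in h by ring. replace (PI + PI) with (2 * PI) in h by ring. congruence. }
  assert (k3 : RInt g PI (3 * (PI / 2)) = J :> R).
  { pose proof (shift_int g fc PI 0 (PI / 2) s2) as h.
    replace (0 + PI) with PI in h by ring. replace (PI / 2 + PI) with (3 * (PI / 2)) in h by field. auto. }
  assert (k4 : RInt g (- (PI / 2)) 0 = J :> R).
  { pose proof (refl_int g fc 0 0 (PI / 2) s3) as h.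
    replace (0 - PI / 2) with (- (PI / 2)) in h by ring. replace (0 - 0) with 0 in h by ring. auto. }
  split; [apply hpos; lra|].
  split; [rewrite <- (hch 0 PI (2 * PI)); lra|].
  split; [rewrite <- (hch 0 PI (3 * (PI / 2))); lra|].
  split; [rewrite (my_swap g fc (- (PI / 2)) 0); lra|].
  split; auto.
Qed.

Lemma Q_formula eps H chi : 0 < eps -> 0 < H ->
  Q_fun eps chi H = PI / (2 * RInt (gf eps H) 0 (PI / 2)) * RInt (gf eps H) 0 chi.
Proof.
  intros he hH. destruct (int_facts eps H he hH) as [hJ [h2 _]].
  unfold Q_fun, c_fun. rewrite inv_a by auto. rewrite h2. field. lra.
Qed.

Lemma noZ (k n : Z) : IZR n < IZR k < IZR n + 1 -> False.
Proof.
  intros [h1 h2]. rewrite <- plus_IZR in h2. apply lt_IZR in h1. apply lt_IZR in h2. lia.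
Qed.

Lemma chi_range eps x v : 0 < eps -> x <> 0 ->
  (-(PI / 2) < chi_of eps x v < PI / 2) \/ (PI / 2 < chi_of eps x v < 3 * (PI / 2)).
Proof.
  intros he hx.
  assert (hn : (x, v) <> (0, 0)) by (intros e; injection e; auto).
  pose proof PI_RGT_0 as hpi.
  destruct (chi_trig eps x v he hn) as [hb [hs2 [hs [hc2 [hcp hcn]]]]].
  set (H := Hen eps x v) in *.
  assert (hH : 0 < H) by (apply Hen_pos; auto).
  set (s := v / sqrt (2 * H)) in *.
  assert (hP : 0 < Phi eps x).
  { unfold Phi. assert (0 < x^2) by (apply pow2_gt_0; auto).
    assert (0 <= x^4) by (replace (x^4) with ((x^2)^2) by ring; apply pow2_ge_0).
    assert (0 <= eps * x^4) by (apply Rmult_le_pos; lra). lra. }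
  assert (hHd : H = v^2/2 + Phi eps x) by reflexivity.
  assert (hs1 : s ^ 2 < 1).
  { rewrite hs2. apply Rmult_lt_reg_r with (2*H); [lra|].
    unfold Rdiv; rewrite Rmult_assoc, Rinv_l by lra; lra. }
  assert (hsq : 0 < sqrt (1 - s ^ 2)) by (apply sqrt_lt_R0; lra).
  pose proof (asin_bound s).
  destruct (Rlt_dec 0 x) as [xp|xn].
  - specialize (hcp xp).
    assert (hchi : chi_of eps x v = asin s) by (unfold chi_of; destruct (Rlt_dec 0 x); [reflexivity|lra]).
    rewrite hchi in *.
    assert (asin s <> PI / 2) by (intros e; rewrite e, cos_PI2 in hcp; lra).
    assert (asin s <> - (PI / 2)) by (intros e; rewrite e, cos_neg, cos_PI2 in hcp; lra).
    left. destruct H0 as [h0a h0b].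
    destruct (Rle_lt_or_eq_dec _ _ h0a); destruct (Rle_lt_or_eq_dec _ _ h0b); try lra; congruence.
  - specialize (hcn ltac:(lra)).
    assert (hchi : chi_of eps x v = PI - asin s) by (unfold chi_of; destruct (Rlt_dec 0 x); [lra|reflexivity]).
    rewrite hchi in *.
    assert (PI - asin s <> PI / 2) by (intros e; rewrite e, cos_PI2 in hcn; lra).
    assert (PI - asin s <> 3 * (PI / 2)) by (intros e; rewrite e, cos_3PI2 in hcn; lra).
    right. destruct H0 as [h0a h0b].
    split.
    + destruct (Rle_lt_or_eq_dec _ _ h0b); [lra|]. exfalso. apply H1. rewrite e. field.
    + destruct (Rle_lt_or_eq_dec _ _ h0a); [lra|]. exfalso. apply H2. rewrite <- e. field.
Qed.

Theorem lemma5p2 (eps : R) (heps : 0 < eps) (x v : R) :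
  x = 0 <->
  (((x, v) <> (0, 0) /\ cong2pi (Q_xv eps x v) (PI / 2))
   \/ ((x, v) <> (0, 0) /\ cong2pi (Q_xv eps x v) (- (PI / 2)))
   \/ (x, v) = (0, 0)).
Proof.
  pose proof PI_RGT_0 as hpi.
  split.
  - intros ->. unfold Q_xv. destruct (Req_dec v 0) as [->|hv]; [right; right; auto|].
    assert (hn : (0, v) <> (0, 0)) by (intros e; injection e; auto).
    assert (h2H : 2 * Hen eps 0 v = v ^ 2) by (unfold Hen, Phi; rewrite !pow_i by lia; field).
    unfold chi_of. destruct (Rlt_dec 0 0) as [c|_]; [lra|].
    rewrite h2H.
    set (H := Hen eps 0 v) in *.
    assert (hH : 0 < H) by (apply Hen_pos; auto).
    destruct (int_facts eps H heps hH) as [hJ [h2 [h3 [hm [hp hch]]]]].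
    rewrite Q_formula by auto.
    set (J := RInt (gf eps H) 0 (PI / 2)) in *. assert (hJdef : RInt (gf eps H) 0 (PI / 2) = J) by reflexivity. clearbody J.
    rewrite <- (pow2_abs v), sqrt_pow2 by apply Rabs_pos.
    destruct (Rlt_dec 0 v) as [vp|vn].
    + left. split; auto. rewrite Rabs_pos_eq by lra.
      replace (v / v) with 1 by (field; lra). rewrite asin_1.
      replace (PI - PI / 2) with (PI / 2) by field. rewrite hJdef.
      exists 0%Z. field. lra.
    + right; left. split; auto. rewrite Rabs_left by lra.
      replace (v / - v) with (- (1)) by (field; lra). rewrite asin_opp, asin_1.
      replace (PI - - (PI / 2)) with (3 * (PI / 2)) by field. rewrite h3.
      exists 1%Z. field. lra.
  - intros hd.
    destruct hd as [[hn hc] | [[hn hc] | e]];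
      [ | | injection e; auto].
    all: destruct (Req_dec x 0) as [|hx]; auto; exfalso.
    all: unfold Q_xv in hc; set (H := Hen eps x v) in *;
      assert (hH : 0 < H) by (apply Hen_pos; auto);
      destruct (int_facts eps H heps hH) as [hJ [h2 [h3 [hm [hp hch]]]]];
      rewrite Q_formula in hc by auto;
      set (J := RInt (gf eps H) 0 (PI / 2)) in *; assert (hJdef : RInt (gf eps H) 0 (PI / 2) = J) by reflexivity; clearbody J;
      destruct (chi_trig eps x v heps hn) as [hb [hs2 [hs [hc2 [hcp hcn]]]]];
      set (s := v / sqrt (2 * H)) in *;
      set (chi := chi_of eps x v) in *.
    all: assert (hr : (-(PI / 2) < chi < PI / 2) \/ (PI / 2 < chi < 3 * (PI / 2))) by (apply chi_range; auto).
    all: assert (hQ : (-(PI / 2) < PI / (2 * J) * RInt (gf eps H) 0 chi < PI / 2) \/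
                      (PI / 2 < PI / (2 * J) * RInt (gf eps H) 0 chi < 3 * (PI / 2))) by (
      assert (hc0 : 0 < PI / (2 * J)) by (apply Rdiv_lt_0_compat; lra);
      assert (hcJ : PI / (2 * J) * J = PI / 2) by (field; lra);
      destruct hr as [[r1 r2]|[r1 r2]];
      [ pose proof (hch 0 (-(PI / 2)) chi); pose proof (hch 0 chi (PI / 2));
        pose proof (hp _ _ r1); pose proof (hp _ _ r2); left; split; nra
      | pose proof (hch 0 (PI / 2) chi); pose proof (hch 0 chi (3 * (PI / 2)));
        pose proof (hp _ _ r1); pose proof (hp _ _ r2); right; split; nra ]).
    all: destruct hc as [k hk]; set (QQ := PI / (2 * J) * RInt (gf eps H) 0 chi) in *.
    + destruct hQ as [hQ|hQ].
      * apply (noZ k (-1)). split; apply Rmult_lt_reg_l with (2 * PI); lra.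
      * apply (noZ k 0). split; apply Rmult_lt_reg_l with (2 * PI); lra.
    + destruct hQ as [hQ|hQ].
      * apply (noZ k 0). split; apply Rmult_lt_reg_l with (2 * PI); lra.
      * apply (noZ k 0). split; apply Rmult_lt_reg_l with (2 * PI); lra.
Qed.
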